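(* Let $a,c,p\in\mathbb{C}$ with $-c\notin\mathbb{N}\cup\{0\}$ and $c\neq2$. Write $\sinh(pz)M(a,c;z)=\sum_{n=0}^\infty u_nz^n$, $z\in\mathbb{C}$. Then $u_0=0$, $u_1=p$, $u_2=\frac{ap}{c}$, $u_3=\frac{a(a+1)p}{2c(c+1)}+\frac{p^3}{6}$, $u_4=\frac{ap^3}{6c}+\frac{a(a+1)(a+2)p}{6c(c+1)(c+2)}$, $u_5=\frac{a(a+1)p^3}{12c(c+1)}+\frac{a(a+1)(a+2)(a+3)p}{24c(c+1)(c+2)(c+3)}+\frac{p^5}{120}$, and for all integers $n\ge5$, \[ u_{n+1}=\sum_{i=0}^5\beta_i(n)u_{n-i}, \] where, with $D(n)=(c-2)c\,n(n+1)(c+n-1)(c+n)$, \[ \beta_0(n)=\frac{2\left(a\left(c^2-2cn+c-2(n-2)^2\right)+c(n-1)(2c+n-5)\right)}{(c-2)c(n+1)(c+n)}, \] \[ \beta_1(n)=\frac{1}{D(n)}\Big[(n-4)(n-3)(n-2)(n-1)(4p^2-1)+2(n-3)(n-2)(n-1)\big(4a+c(4p^2-3)\big) +(n-2)(n-1)\big(8a^2+a(4c+6)+c(6(c-2)p^2-6c+1)\big) +2(n-1)\big(a^2(4c-2)-3a(c-1)c+(c-2)c(c+1)p^2\big) +(c-2)\big(-a^2(c+2)+ac+c^2(c+1)p^2\big)\Big], \] \[ \beta_2(n)=\frac{1}{D(n)}\Big[2p^2(c-3)\big(a(3c+8)-2c^2+c-32\big)+2p^2\big(n(10a+c(31-3c)-104)-6(c-6)n^2-4n^3\big)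 -2(a+n-3)\big(2a^2-a(c-2n+3)-(n-2)(2c+n-4)\big)\Big], \] \[ \beta_3(n)=-\frac{1}{D(n)}\Big[p^2\big(-12a^2+2a(6c+5)-6c^2+c\big)+2(n-3)\big(a+c(4p^2-3)p^2\big) +(a-1)a+5(c-2)cp^4+(n-4)(n-3)(8p^4-6p^2+1)\Big], \] \[ \beta_4(n)=\frac{2p^2\left(p^2(-6a+5c+4(n-4))+3a-2c-n+4\right)}{D(n)},\qquad \beta_5(n)=\frac{4p^6-5p^4+p^2}{D(n)}. \]
   Context: For $a\in\mathbb{C}$, $(a)_n=a(a+1)\cdots(a+n-1)$ denotes the Pochhammer symbol, with $(a)_0=1$. For $a,c\in\mathbb{C}$ with $-c\notin\mathbb{N}\cup\{0\}$, the confluent hypergeometric (Kummer) function is $M(a,c;z)=\sum_{n=0}^\infty \frac{(a)_n}{(c)_n\,n!}z^n$, $z\in\mathbb{C}$. *)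

(* Defs.v *)
From HB Require Import structures.
From mathcomp Require Import all_boot all_order all_algebra.
From mathcomp Require Import complex.
From mathcomp Require Import reals.
Set Implicit Arguments. Unset Strict Implicit. Unset Printing Implicit Defensive.
Import Order.TTheory GRing.Theory Num.Theory.
Local Open Scope ring_scope.

Section Defs.
Variable F : fieldType.

Definition poch (a : F) (n : nat) : F := \prod_(i < n) (a + i%:R).

Definition kummer_coef (a c : F) (n : nat) : F :=
  poch a n / (poch c n * (n`!)%:R).

(* n-th Taylor coefficient of sinh(p z) = (e^{pz} - e^{-pz})/2 *)
Definition sinh_coef (p : F) (n : nat) : F :=
  (p ^+ n - (- p) ^+ n) / (2 * (n`!)%:R).

(* u_n : n-th Taylor coefficient of sinh(pz) M(a,c;z) (Cauchy product) *)
Definition u_coef (a c p : F) (n : nat) : F :=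
  \sum_(k < n.+1) sinh_coef p k * kummer_coef a c (n - k).

Definition Dn (c : F) (n : nat) : F :=
  let N := n%:R in (c - 2) * c * N * (N + 1) * (c + N - 1) * (c + N).

Definition beta0 (a c : F) (n : nat) : F :=
  let N := n%:R in
  2 * (a * (c ^+ 2 - 2 * c * N + c - 2 * (N - 2) ^+ 2)
       + c * (N - 1) * (2 * c + N - 5))
  / ((c - 2) * c * (N + 1) * (c + N)).

Definition beta1 (a c p : F) (n : nat) : F :=
  let N := n%:R in
  ((N - 4) * (N - 3) * (N - 2) * (N - 1) * (4 * p ^+ 2 - 1)
   + 2 * (N - 3) * (N - 2) * (N - 1) * (4 * a + c * (4 * p ^+ 2 - 3))
   + (N - 2) * (N - 1) * (8 * a ^+ 2 + a * (4 * c + 6)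
                          + c * (6 * (c - 2) * p ^+ 2 - 6 * c + 1))
   + 2 * (N - 1) * (a ^+ 2 * (4 * c - 2) - 3 * a * (c - 1) * c
                    + (c - 2) * c * (c + 1) * p ^+ 2)
   + (c - 2) * (- a ^+ 2 * (c + 2) + a * c + c ^+ 2 * (c + 1) * p ^+ 2))
  / Dn c n.

Definition beta2 (a c p : F) (n : nat) : F :=
  let N := n%:R in
  (2 * p ^+ 2 * (c - 3) * (a * (3 * c + 8) - 2 * c ^+ 2 + c - 32)
   + 2 * p ^+ 2 * (N * (10 * a + c * (31 - 3 * c) - 104)
                   - 6 * (c - 6) * N ^+ 2 - 4 * N ^+ 3)
   - 2 * (a + N - 3) * (2 * a ^+ 2 - a * (c - 2 * N + 3)
                        - (N - 2) * (2 * c + N - 4)))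
  / Dn c n.

Definition beta3 (a c p : F) (n : nat) : F :=
  let N := n%:R in
  - ((p ^+ 2 * (- 12 * a ^+ 2 + 2 * a * (6 * c + 5) - 6 * c ^+ 2 + c)
      + 2 * (N - 3) * (a + c * (4 * p ^+ 2 - 3) * p ^+ 2)
      + (a - 1) * a + 5 * (c - 2) * c * p ^+ 4
      + (N - 4) * (N - 3) * (8 * p ^+ 4 - 6 * p ^+ 2 + 1))
     / Dn c n).

Definition beta4 (a c p : F) (n : nat) : F :=
  let N := n%:R in
  2 * p ^+ 2 * (p ^+ 2 * (- 6 * a + 5 * c + 4 * (N - 4)) + 3 * a - 2 * c - N + 4)
  / Dn c n.

Definition beta5 (c p : F) (n : nat) : F :=
  (4 * p ^+ 6 - 5 * p ^+ 4 + p ^+ 2) / Dn c n.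

End Defs.

(* Main.v *)
Require Import Defs.
From HB Require Import structures.
From mathcomp Require Import all_boot all_order all_algebra.
From mathcomp Require Import complex.
From mathcomp Require Import reals.
From mathcomp Require Import ring.
Import Order.TTheory GRing.Theory Num.Theory.
Local Open Scope ring_scope.

Lemma key (F : fieldType) (a c q K x0 x1 x2 x3 x4 x5 x6 : F)
  (n0 : c - 2 != 0) (n1 : c != 0) (k2 : K + 2 != 0) (k3 : K + 3 != 0)
  (k4 : K + 4 != 0) (k5 : K + 5 != 0) (k6 : K + 6 != 0)
  (c1 : K + 1 + c != 0) (c2 : K + 2 + c != 0) (c3 : K + 3 + c != 0)
  (c4 : K + 4 + c != 0) (c5 : K + 5 + c != 0)
  (h2 : (K+2)*(K+1+c) * x2 = ((1+2*q)*(K+1) + c*q + a) * x1 - q*(1+q) * x0)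
  (h3 : (K+3)*(K+2+c) * x3 = ((1+2*q)*(K+2) + c*q + a) * x2 - q*(1+q) * x1)
  (h4 : (K+4)*(K+3+c) * x4 = ((1+2*q)*(K+3) + c*q + a) * x3 - q*(1+q) * x2)
  (h5 : (K+5)*(K+4+c) * x5 = ((1+2*q)*(K+4) + c*q + a) * x4 - q*(1+q) * x3)
  (h6 : (K+6)*(K+5+c) * x6 = ((1+2*q)*(K+5) + c*q + a) * x5 - q*(1+q) * x4) :
  let N := K + 5 in
  let D := (c - 2) * c * N * (N + 1) * (c + N - 1) * (c + N) in
  x6 = 2 * (a * (c ^+ 2 - 2 * c * N + c - 2 * (N - 2) ^+ 2)
       + c * (N - 1) * (2 * c + N - 5))
  / ((c - 2) * c * (N + 1) * (c + N)) * x5 + 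
  ((N - 4) * (N - 3) * (N - 2) * (N - 1) * (4 * q ^+ 2 - 1)
   + 2 * (N - 3) * (N - 2) * (N - 1) * (4 * a + c * (4 * q ^+ 2 - 3))
   + (N - 2) * (N - 1) * (8 * a ^+ 2 + a * (4 * c + 6)
                          + c * (6 * (c - 2) * q ^+ 2 - 6 * c + 1))
   + 2 * (N - 1) * (a ^+ 2 * (4 * c - 2) - 3 * a * (c - 1) * c
                    + (c - 2) * c * (c + 1) * q ^+ 2)
   + (c - 2) * (- a ^+ 2 * (c + 2) + a * c + c ^+ 2 * (c + 1) * q ^+ 2))
  / D * x4 +
  (2 * q ^+ 2 * (c - 3) * (a * (3 * c + 8) - 2 * c ^+ 2 + c - 32)
   + 2 * q ^+ 2 * (N * (10 * a + c * (31 - 3 * c) - 104)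
                   - 6 * (c - 6) * N ^+ 2 - 4 * N ^+ 3)
   - 2 * (a + N - 3) * (2 * a ^+ 2 - a * (c - 2 * N + 3)
                        - (N - 2) * (2 * c + N - 4)))
  / D * x3 +
  - ((q ^+ 2 * (- 12 * a ^+ 2 + 2 * a * (6 * c + 5) - 6 * c ^+ 2 + c)
      + 2 * (N - 3) * (a + c * (4 * q ^+ 2 - 3) * q ^+ 2)
      + (a - 1) * a + 5 * (c - 2) * c * q ^+ 4
      + (N - 4) * (N - 3) * (8 * q ^+ 4 - 6 * q ^+ 2 + 1))
     / D) * x2 +
  2 * q ^+ 2 * (q ^+ 2 * (- 6 * a + 5 * c + 4 * (N - 4)) + 3 * a - 2 * c - N + 4)
  / D * x1 +
  (4 * q ^+ 6 - 5 * q ^+ 4 + q ^+ 2) / D * x0.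
Proof.
move=> N D.
have e2 : x2 = (((1+2*q)*(K+1) + c*q + a) * x1 - q*(1+q) * x0) / ((K+2)*(K+1+c)).
  by rewrite -h2 mulrC mulKf // mulf_neq0.
have e3 : x3 = (((1+2*q)*(K+2) + c*q + a) * x2 - q*(1+q) * x1) / ((K+3)*(K+2+c)).
  by rewrite -h3 mulrC mulKf // mulf_neq0.
have e4 : x4 = (((1+2*q)*(K+3) + c*q + a) * x3 - q*(1+q) * x2) / ((K+4)*(K+3+c)).
  by rewrite -h4 mulrC mulKf // mulf_neq0.
have e5 : x5 = (((1+2*q)*(K+4) + c*q + a) * x4 - q*(1+q) * x3) / ((K+5)*(K+4+c)).
  by rewrite -h5 mulrC mulKf // mulf_neq0.
have e6 : x6 = (((1+2*q)*(K+5) + c*q + a) * x5 - q*(1+q) * x4) / ((K+6)*(K+5+c)).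
  by rewrite -h6 mulrC mulKf // mulf_neq0.
rewrite e6 e5 e4 e3 e2 /D /N.
field.
have -> : c + (K + 5) = K + 5 + c by ring.
have -> : K + 5 + c - 1 = K + 4 + c by ring.
have -> : K + 5 + 1 = K + 6 by ring.
by rewrite n0 n1 k2 k3 k4 k5 k6 c1 c2 c3 c4 c5.
Qed.

Section S.
Variable R : realType.
Local Notation C := (R[i]).

Definition tq (q : C) k := q ^+ k / (k`!)%:R.
Definition V (f : nat -> C) q n := \sum_(k < n.+1) tq q k * f (n - k)%N.

Lemma natnz (k : nat) : (k.+1)%:R != 0 :> C.
Proof. by rewrite pnatr_eq0. Qed.

Lemma factnz k : (k`!)%:R != 0 :> C.
Proof. by rewrite pnatr_eq0 -lt0n fact_gt0. Qed.

Lemma tqS q k : (k.+1)%:R * tq q k.+1 = q * tq q k.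
Proof.
rewrite /tq factS natrM exprS.
have := natnz k; have := factnz k => h1 h2.
by field; rewrite h1 addrC natr1 h2.
Qed.

Lemma L1 f q n : V (fun j => j%:R * f j) q n.+1 = n.+1%:R * V f q n.+1 - q * V f q n.
Proof.
have E : V (fun j => j%:R * f j) q n.+1 = \sum_(k < n.+2) (n.+1%:R * (tq q k * f (n.+1 - k)%N))
    - \sum_(k < n.+2) k%:R * tq q k * f (n.+1-k)%N.
  rewrite /V -sumrB; apply eq_bigr => k _; rewrite natrB; first by ring.
  by rewrite -ltnS.
rewrite E -mulr_sumr; congr (_ - _).
rewrite big_ord_recl /= mul0r mul0r add0r /V mulr_sumr; apply eq_bigr => i _.

by rewrite /bump /= add1n subSS tqS mulrA.
Qed.

Lemma L2 f q n : V (fun j => j.+1%:R * f j.+1) q n = V (fun j => j%:R * f j) q n.+1.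
Proof.
rewrite /V [in RHS]big_ord_recr /= subnn mul0r mulr0 addr0.
apply eq_bigr => i _; rewrite subSn //.
by rewrite -ltnS.
Qed.

Lemma Vlin f g h k q n al be ga :
  (forall j, f j = al * g j + be * h j + ga * k j) ->
  V f q n = al * V g q n + be * V h q n + ga * V k q n.
Proof.
move=> H; rewrite /V !mulr_sumr -!big_split; apply eq_bigr => i _; rewrite H /=; ring.
Qed.


Lemma pochS (a : C) n : poch a n.+1 = poch a n * (a + n%:R).
Proof. by rewrite /poch big_ord_recr. Qed.

Variables (a c : C).
Hypothesis hc : forall m : nat, c != - (m%:R).

Lemma cnz (j : nat) : j%:R + c != 0.
Proof. by rewrite addrC addr_eq0 hc. Qed.

Lemma poch_nz n : poch c n != 0.
Proof. by apply/prodf_neq0 => i _; rewrite addrC cnz. Qed.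

Local Notation m := (kummer_coef a c).

Lemma kumS j : (j.+1%:R) * (j%:R + c) * m j.+1 = (j%:R + a) * m j.
Proof.
rewrite /kummer_coef !pochS factS natrM.
have h1 := poch_nz j; have h2 := cnz j; have h3 := factnz j; have h4 := natnz j.
field; rewrite nat1r h4 h3 h1 /=.
by rewrite addrC.
Qed.

Lemma Vrec q k : k.+2%:R * (k.+1%:R + c) * V m q k.+2
  = ((1 + 2 * q) * k.+1%:R + c * q + a) * V m q k.+1 - q * (1 + q) * V m q k.
Proof.
pose w := fun j => j%:R * m j.
pose f := fun j => (j%:R + c - 1) * m j.
have g0 : V (fun j => j.+1%:R * f j.+1 - w j - a * m j) q k.+1 = 0.
  rewrite /V big1 // => i _; rewrite /f /w.
  set j := (k.+1 - i)%N.
  have H := kumS j.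
  rewrite (_ : j.+1%:R * ((j.+1%:R + c - 1) * m j.+1) = j.+1%:R * (j%:R + c) * m j.+1).
    by rewrite H; ring.
  by rewrite -natr1; ring.
rewrite (@Vlin _ (fun j => j.+1%:R * f j.+1) w m q k.+1 1 (-1) (-a)) in g0; last first.
  by move=> j /=; ring.
have Lf : forall n, V f q n = V w q n + (c - 1) * V m q n.
  move=> n; rewrite (@Vlin _ w m m q n 1 (c - 1) 0); first by ring.
  by move=> j; rewrite /f /w /=; ring.
have Lw : forall n, V w q n.+1 = n.+1%:R * V m q n.+1 - q * V m q n by move=> n; exact: L1.
rewrite L2 L1 !Lf !Lw in g0.
have : k.+2%:R * (k.+1%:R + c) * V m q k.+2
  - (((1 + 2 * q) * k.+1%:R + c * q + a) * V m q k.+1 - q * (1 + q) * V m q k) = 0.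
  by rewrite -g0; ring.
by move/eqP; rewrite subr_eq0 => /eqP.
Qed.


Hypothesis hc2 : c != 2.

Lemma c0 : c != 0.
Proof. by have := hc 0%N; rewrite oppr0. Qed.

Lemma key2 (p q : C) (X : nat -> C) (k : nat) (hq : q ^+ 2 = p ^+ 2)
  (hrec : forall j, j.+2%:R * (j.+1%:R + c) * X j.+2
     = ((1 + 2 * q) * j.+1%:R + c * q + a) * X j.+1 - q * (1 + q) * X j) :
  X k.+4.+2 = beta0 a c k.+4.+1 * X k.+4.+1 + beta1 a c p k.+4.+1 * X k.+4
   + beta2 a c p k.+4.+1 * X k.+3 + beta3 a c p k.+4.+1 * X k.+2
   + beta4 a c p k.+4.+1 * X k.+1 + beta5 c p k.+4.+1 * X k.
Proof.
pose K : C := k%:R.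
have hq4 : p ^+ 4 = q ^+ 4 by rewrite -[4%N]/(2 * 2)%N !exprM hq.
have hq6 : p ^+ 6 = q ^+ 6 by rewrite -[6%N]/(2 * 3)%N !exprM hq.
have kn : forall j, K + j.+1%:R != 0 by move=> j; rewrite /K -natrD pnatr_eq0 addnS.
have kc : forall j, K + j%:R + c != 0 by move=> j; rewrite /K -natrD cnz.
have e5n : k.+4.+1%:R = K + 5 :> C by rewrite /K; ring.
have n0 : c - 2 != 0 by rewrite subr_eq0 hc2.
have k2 : K + 2 != 0 by exact: (kn 1%N).
have k3 : K + 3 != 0 by exact: (kn 2%N).
have k4 : K + 4 != 0 by exact: (kn 3%N).
have k5 : K + 5 != 0 by exact: (kn 4%N).
have k6 : K + 6 != 0 by exact: (kn 5%N).
have c1 : K + 1 + c != 0 by exact: (kc 1%N).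
have c2 : K + 2 + c != 0 by exact: (kc 2%N).
have c3 : K + 3 + c != 0 by exact: (kc 3%N).
have c4 : K + 4 + c != 0 by exact: (kc 4%N).
have c5 : K + 5 + c != 0 by exact: (kc 5%N).
have H : forall j, (K + j.+2%:R) * (K + j.+1%:R + c) * X (k + j).+2
     = ((1 + 2 * q) * (K + j.+1%:R) + c * q + a) * X (k + j).+1 - q * (1 + q) * X (k + j)%N.
  move=> j; rewrite (_ : (K + j.+2%:R) * (K + j.+1%:R + c) = (k + j).+2%:R * ((k + j).+1%:R + c)).
    by rewrite hrec /K; ring.
  by rewrite /K; ring.
have h2 := H 0%N; have h3 := H 1%N; have h4 := H 2%N; have h5 := H 3%N; have h6 := H 4%N.
rewrite !addn0 in h2.
rewrite /beta0 /beta1 /beta2 /beta3 /beta4 /beta5 /Dn /= e5n hq4 hq6 -hq.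
rewrite !addnS addn0 in h3 h4 h5 h6.
move: h2 h3 h4 h5 h6.
set x0 := X k; set x1 := X k.+1; set x2 := X k.+2; set x3 := X k.+3; set x4 := X k.+4; set x5 := X k.+4.+1; set x6 := X k.+4.+2.
move=> h2 h3 h4 h5 h6.
have e2 : x2 = (((1+2*q)*(K+1) + c*q + a) * x1 - q*(1+q) * x0) / ((K+2)*(K+1+c)).
  by rewrite -h2 mulrC mulKf // mulf_neq0.
have e3 : x3 = (((1+2*q)*(K+2) + c*q + a) * x2 - q*(1+q) * x1) / ((K+3)*(K+2+c)).
  by rewrite -h3 mulrC mulKf // mulf_neq0.
have e4 : x4 = (((1+2*q)*(K+3) + c*q + a) * x3 - q*(1+q) * x2) / ((K+4)*(K+3+c)).
  by rewrite -h4 mulrC mulKf // mulf_neq0.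
have e5 : x5 = (((1+2*q)*(K+4) + c*q + a) * x4 - q*(1+q) * x3) / ((K+5)*(K+4+c)).
  by rewrite -h5 mulrC mulKf // mulf_neq0.
have e6 : x6 = (((1+2*q)*(K+5) + c*q + a) * x5 - q*(1+q) * x4) / ((K+6)*(K+5+c)).
  by rewrite -h6 mulrC mulKf // mulf_neq0.
rewrite e6 e5 e4 e3 e2.
field.
have -> : c + (K + 5) = K + 5 + c by ring.
have -> : K + 5 + c - 1 = K + 4 + c by ring.
have -> : K + 5 + 1 = K + 6 by ring.
by rewrite n0 c0 k2 k3 k4 k5 k6 c1 c2 c3 c4 c5.
Qed.

Lemma uV p n : u_coef a c p n = (V m p n - V m (-p) n) / 2.
Proof.
rewrite /u_coef /V -sumrB mulr_suml; apply eq_bigr => k _.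
rewrite /sinh_coef /tq.
have := factnz k => h.
by field.
Qed.

End S.

Theorem theorem2p9 (R : realType) (a c p : R[i])
  (hc : forall m : nat, c != - (m%:R))
  (hc2 : c != 2) :
  let u := u_coef a c p in
  [/\ u 0%N = 0, u 1%N = p, u 2%N = a * p / c,
      u 3%N = a * (a + 1) * p / (2 * c * (c + 1)) + p ^+ 3 / 6
    & u 4%N = a * p ^+ 3 / (6 * c)
              + a * (a + 1) * (a + 2) * p / (6 * c * (c + 1) * (c + 2))] /\
  (u 5%N = a * (a + 1) * p ^+ 3 / (12 * c * (c + 1))
              + a * (a + 1) * (a + 2) * (a + 3) * p
                / (24 * c * (c + 1) * (c + 2) * (c + 3))
              + p ^+ 5 / 120) /\
  (forall n : nat, (5 <= n)%N ->
      u n.+1 = beta0 a c n * u n + beta1 a c p n * u (n - 1)%N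
               + beta2 a c p n * u (n - 2)%N + beta3 a c p n * u (n - 3)%N
               + beta4 a c p n * u (n - 4)%N + beta5 c p n * u (n - 5)%N).
Proof.
move=> u.
have c0 : c != 0 by have := hc 0%N; rewrite oppr0.
have cn : forall j, c + j%:R != 0 by move=> j; rewrite addr_eq0 hc.
have c1 := cn 1%N; have c2 := cn 2%N; have c3 := cn 3%N; have c4 := cn 4%N.
split; [split | split].
all: try (rewrite /u /u_coef /sinh_coef /kummer_coef /poch !big_ord_recr !big_ord0 /subn /factorial /=; field;
  by rewrite ?c0 ?c1 ?c2 ?c3 ?c4).
move=> n; case: n => [|[|[|[|[|k]]]]] // _.
rewrite /u !uV // !subSS !subn0.
rewrite (@key2 R a c hc hc2 p p (@V R (kummer_coef a c) p) k) //; last by move=> j; exact: Vrec.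
rewrite (@key2 R a c hc hc2 p (-p) (@V R (kummer_coef a c) (-p)) k); last by move=> j; exact: Vrec.
  by ring.
by rewrite sqrrN.
Qed.
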